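(* Let $M\models\mathrm{AA}$ be extremally $\aleph_0$-saturated. If $x\in M$ is normal and $y\in M$, then there is at most one pair $(u,v)\in M^2$ with $y=xu+v$ and $v+1\le x$. Moreover, writing, for normal $x$ and arbitrary $y$, $y=x\cdot f(x,y)+g(x,y)$ with $g(x,y)+1\le x$, the functions $f$ and $g$ are definable on the set $\{(x,y)\in M^2: |x|=1\}$.
   Context: Structures are complete metric spaces of diameter at most $1$ in the language $L=\{+,\cdot,\wedge,\vee,0,1\}$ (operations $1$-Lipschitz, $d$ the only relation symbol). Affine formulas are built from $1$ and atomic formulas $d(t_1,t_2)$ using $+$, scalar multiplication by reals, $\sup_x$, $\inf_x$. $\mathrm{AA}$ is the set of all closed affine conditions true in every model of first-order Peano arithmetic (formulated in $L$ with lattice operations min/max and discrete metric). $|x|=d(x,0)$; $x$ is normal if $|x|=1$; $x\le y$ means $x\wedge y=x$. A model $M$ is extremally $\aleph_0$-saturated if for every finite $A\subseteq M$ every extreme type over $A$ (an extreme point of the compact convex set of positive linear functionals $p$ with $p(1)=1$ on affine formulas in one variable with parameters from $A$, modulo the theory of $(M,a)_{a\in A}$) is realized in $M$. For a definable set $E\subseteq M^2$ (here $E=\{(x,y):|x|=1\}$), a function $h:E\to M$ is definable if $(x,y,z)\mapsto d(h(x,y),z)$ is a uniform limit on $E\times M$ of interpretations of affine formulas with parameters from $M$. *)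

(* Defs.v *)
From Stdlib Require Import Reals List ClassicalEpsilon.
Open Scope R_scope.

Record Lstr := {
  car :> Type;
  dist : car -> car -> R;
  sadd : car -> car -> car;
  smul : car -> car -> car;
  smeet : car -> car -> car;
  sjoin : car -> car -> car;
  szero : car;
  sone : car }.

Definition Lip2 (S : Lstr) (f : car S -> car S -> car S) : Prop :=
  forall x y x' y', dist S (f x y) (f x' y') <= dist S x x' + dist S y y'.

Record Lstructure_ok (S : Lstr) : Prop := {
  d_refl : forall x, dist S x x = 0;
  d_sep : forall x y, dist S x y = 0 -> x = y;
  d_sym : forall x y, dist S x y = dist S y x;
  d_tri : forall x y z, dist S x z <= dist S x y + dist S y z;
  d_diam : forall x y, 0 <= dist S x y <= 1;
  d_complete : forall u : nat -> car S,
    (forall eps, eps > 0 -> exists N, forall m n, (m >= N)%nat -> (n >= N)%nat ->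
        dist S (u m) (u n) < eps) ->
    exists l, forall eps, eps > 0 -> exists N, forall n, (n >= N)%nat -> dist S (u n) l < eps;
  lip_add : Lip2 S (sadd S);
  lip_mul : Lip2 S (smul S);
  lip_meet : Lip2 S (smeet S);
  lip_join : Lip2 S (sjoin S) }.

Inductive term (P : Type) : Type :=
  | tvar (n : nat)
  | tpar (p : P)
  | tadd (s t : term P)
  | tmul (s t : term P)
  | tmeet (s t : term P)
  | tjoin (s t : term P)
  | tzero
  | tone.
Arguments tvar {P}. Arguments tpar {P}. Arguments tadd {P}. Arguments tmul {P}.
Arguments tmeet {P}. Arguments tjoin {P}. Arguments tzero {P}. Arguments tone {P}.

Inductive aform (P : Type) : Type :=
  | fone
  | fdist (s t : term P)
  | fadd (phi psi : aform P)
  | fscale (r : R) (phi : aform P)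
  | fsup (n : nat) (phi : aform P)
  | finf (n : nat) (phi : aform P).
Arguments fone {P}. Arguments fdist {P}. Arguments fadd {P}. Arguments fscale {P}.
Arguments fsup {P}. Arguments finf {P}.

Definition upd {X : Type} (e : nat -> X) (n : nat) (a : X) : nat -> X :=
  fun k => if Nat.eqb k n then a else e k.

Fixpoint teval {P : Type} (S : Lstr) (pi : P -> car S) (e : nat -> car S)
    (t : term P) : car S :=
  match t with
  | tvar n => e n
  | tpar p => pi p
  | tadd s t => sadd S (teval S pi e s) (teval S pi e t)
  | tmul s t => smul S (teval S pi e s) (teval S pi e t)
  | tmeet s t => smeet S (teval S pi e s) (teval S pi e t)
  | tjoin s t => sjoin S (teval S pi e s) (teval S pi e t)
  | tzero => szero S
  | tone => sone S
  end.

Definition Rsup (E : R -> Prop) : R := epsilon (inhabits 0) (fun s => is_lub E s).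

Fixpoint feval {P : Type} (S : Lstr) (pi : P -> car S) (e : nat -> car S)
    (phi : aform P) : R :=
  match phi with
  | fone => 1
  | fdist s t => dist S (teval S pi e s) (teval S pi e t)
  | fadd phi psi => feval S pi e phi + feval S pi e psi
  | fscale r phi => r * feval S pi e phi
  | fsup n phi => Rsup (fun r => exists a : car S, r = feval S pi (upd e n a) phi)
  | finf n phi => - Rsup (fun r => exists a : car S, r = - feval S pi (upd e n a) phi)
  end.

Fixpoint term_vars_in {P : Type} (V : nat -> Prop) (t : term P) : Prop :=
  match t with
  | tvar n => V n
  | tpar _ | tzero | tone => True
  | tadd s t | tmul s t | tmeet s t | tjoin s t => term_vars_in V s /\ term_vars_in V t
  end.

Fixpoint form_vars_in {P : Type} (V : nat -> Prop) (phi : aform P) : Prop :=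
  match phi with
  | fone => True
  | fdist s t => term_vars_in V s /\ term_vars_in V t
  | fadd phi psi => form_vars_in V phi /\ form_vars_in V psi
  | fscale _ phi => form_vars_in V phi
  | fsup n phi | finf n phi => form_vars_in (fun k => k = n \/ V k) phi
  end.

Definition closed_form {P : Type} (phi : aform P) : Prop :=
  form_vars_in (fun _ => False) phi.

Fixpoint term_pars_in {P : Type} (Q : P -> Prop) (t : term P) : Prop :=
  match t with
  | tvar _ | tzero | tone => True
  | tpar p => Q p
  | tadd s t | tmul s t | tmeet s t | tjoin s t => term_pars_in Q s /\ term_pars_in Q t
  end.

Fixpoint form_pars_in {P : Type} (Q : P -> Prop) (phi : aform P) : Prop :=
  match phi with
  | fone => True
  | fdist s t => term_pars_in Q s /\ term_pars_in Q t
  | fadd phi psi => form_pars_in Q phi /\ form_pars_in Q psi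
  | fscale _ phi => form_pars_in Q phi
  | fsup _ phi | finf _ phi => form_pars_in Q phi
  end.

Definition sent_val (S : Lstr) (phi : aform Empty_set) : R :=
  feval S (fun p : Empty_set => match p with end) (fun _ => szero S) phi.

Inductive aterm : Type :=
  | avar (n : nat) | azero | aone | aadd (s t : aterm) | amul (s t : aterm).

Inductive aformula : Type :=
  | aeq (s t : aterm)
  | afalse
  | aimp (phi psi : aformula)
  | aforall (n : nat) (phi : aformula).

Record PAsig := {
  pcar :> Type;
  padd : pcar -> pcar -> pcar;
  pmul : pcar -> pcar -> pcar;
  pzero : pcar;
  pone : pcar }.

Fixpoint ateval (N : PAsig) (e : nat -> pcar N) (t : aterm) : pcar N :=
  match t with
  | avar n => e n
  | azero => pzero N
  | aone => pone N
  | aadd s t => padd N (ateval N e s) (ateval N e t)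
  | amul s t => pmul N (ateval N e s) (ateval N e t)
  end.

Fixpoint asat (N : PAsig) (e : nat -> pcar N) (phi : aformula) : Prop :=
  match phi with
  | aeq s t => ateval N e s = ateval N e t
  | afalse => False
  | aimp phi psi => asat N e phi -> asat N e psi
  | aforall n phi => forall a : pcar N, asat N (upd e n a) phi
  end.

Record PAmodel (N : PAsig) : Prop := {
  pa_succ_ne0 : forall x, padd N x (pone N) <> pzero N;
  pa_succ_inj : forall x y, padd N x (pone N) = padd N y (pone N) -> x = y;
  pa_add0 : forall x, padd N x (pzero N) = x;
  pa_addS : forall x y, padd N x (padd N y (pone N)) = padd N (padd N x y) (pone N);
  pa_mul0 : forall x, pmul N x (pzero N) = pzero N;
  pa_mulS : forall x y, pmul N x (padd N y (pone N)) = padd N (pmul N x y) x;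
  pa_ind : forall (phi : aformula) (n : nat) (e : nat -> pcar N),
    asat N (upd e n (pzero N)) phi ->
    (forall a, asat N (upd e n a) phi -> asat N (upd e n (padd N a (pone N))) phi) ->
    forall a, asat N (upd e n a) phi }.

Definition PA_le (N : PAsig) (x y : pcar N) : Prop := exists z, padd N x z = y.

Definition PA_Lstr (N : PAsig) : Lstr := {|
  car := pcar N;
  dist := fun x y => if excluded_middle_informative (x = y) then 0 else 1;
  sadd := padd N;
  smul := pmul N;
  smeet := fun x y => if excluded_middle_informative (PA_le N x y) then x else y;
  sjoin := fun x y => if excluded_middle_informative (PA_le N x y) then y else x;
  szero := pzero N;
  sone := pone N |}.

Definition satisfies_AA (M : Lstr) : Prop :=
  forall phi : aform Empty_set, closed_form phi ->
    (forall N : PAsig, PAmodel N -> sent_val (PA_Lstr N) phi <= 0) ->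
    sent_val M phi <= 0.

Definition D1 (M : Lstr) (A : list (car M)) (phi : aform (car M)) : Prop :=
  form_vars_in (fun k => k = 0%nat) phi /\ form_pars_in (fun a => In a A) phi.

Definition ev1 (M : Lstr) (b : car M) (phi : aform (car M)) : R :=
  feval M (fun a => a) (fun _ => b) phi.

(* positive (modulo the theory of (M,a)_{a in A}) linear functionals with p(1)=1 *)
Definition is_type (M : Lstr) (A : list (car M)) (p : aform (car M) -> R) : Prop :=
  p fone = 1 /\
  (forall phi psi, D1 M A phi -> D1 M A psi -> p (fadd phi psi) = p phi + p psi) /\
  (forall r phi, D1 M A phi -> p (fscale r phi) = r * p phi) /\
  (forall phi, D1 M A phi -> (forall b, 0 <= ev1 M b phi) -> 0 <= p phi).

Definition is_extreme_type (M : Lstr) (A : list (car M)) (p : aform (car M) -> R) : Prop :=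
  is_type M A p /\
  forall (q1 q2 : aform (car M) -> R) (t : R),
    is_type M A q1 -> is_type M A q2 -> 0 < t < 1 ->
    (forall phi, D1 M A phi -> p phi = t * q1 phi + (1 - t) * q2 phi) ->
    forall phi, D1 M A phi -> q1 phi = p phi /\ q2 phi = p phi.

Definition realized (M : Lstr) (A : list (car M)) (p : aform (car M) -> R) : Prop :=
  exists b : car M, forall phi, D1 M A phi -> p phi = ev1 M b phi.

Definition extremally_aleph0_saturated (M : Lstr) : Prop :=
  forall (A : list (car M)) (p : aform (car M) -> R),
    is_extreme_type M A p -> realized M A p.

Definition normal (M : Lstr) (x : car M) : Prop := dist M x (szero M) = 1.

Definition Lle (M : Lstr) (x y : car M) : Prop := smeet M x y = x.

Definition env3 (M : Lstr) (x y z : car M) : nat -> car M :=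
  fun k => match k with 0%nat => x | 1%nat => y | _ => z end.

Definition definable_on_E (M : Lstr) (h : car M -> car M -> car M) : Prop :=
  forall eps, eps > 0 ->
    exists phi : aform (car M),
      form_vars_in (fun k => k = 0%nat \/ k = 1%nat \/ k = 2%nat) phi /\
      forall x y z, normal M x ->
        Rabs (dist M (h x y) z - feval M (fun a => a) (env3 M x y z) phi) <= eps.

(* Main.v *)
Require Import Defs.
From Stdlib Require Import Reals List.
From Stdlib Require Import Lra Lia ClassicalEpsilon Classical Setoid.
Require Import Defs.
Open Scope R_scope.
Lemma Rabs_le_inv (x a : R) : Rabs x <= a -> -a <= x <= a.
Proof. intro h. pose proof (Rle_abs x). pose proof (Rabs_Ropp x). pose proof (Rle_abs (-x)). lra. Qed.

Definition dbounded (S : Lstr) := forall x y : car S, 0 <= dist S x y <= 1.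

Fixpoint fbound {P} (phi : aform P) : R :=
  match phi with
  | fone => 1
  | fdist _ _ => 1
  | fadd p q => fbound p + fbound q
  | fscale r p => Rabs r * fbound p
  | fsup _ p | finf _ p => fbound p
  end.

Lemma Rsup_lub (E : R -> Prop) (B : R) :
  (forall r, E r -> r <= B) -> (exists r, E r) -> is_lub E (Rsup E).
Proof.
  intros HB Hne. unfold Rsup. apply epsilon_spec.
  destruct (completeness E) as [m Hm].
  - exists B. intros r Hr; apply HB; auto.
  - exact Hne.
  - exists m; exact Hm.
Qed.

Lemma feval_bound {P} (S : Lstr) (H : dbounded S) (pi : P -> car S) (phi : aform P) :
  forall e, Rabs (feval S pi e phi) <= fbound phi.
Proof.
  induction phi; intro e; simpl.
  - rewrite Rabs_R1; lra.
  - destruct (H (teval S pi e s) (teval S pi e t)). rewrite Rabs_pos_eq; lra.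
  - eapply Rle_trans; [apply Rabs_triang|]. specialize (IHphi1 e); specialize (IHphi2 e); lra.
  - rewrite Rabs_mult. apply Rmult_le_compat_l; [apply Rabs_pos| apply IHphi].
  - assert (HB: forall r, (exists a, r = feval S pi (upd e n a) phi) -> r <= fbound phi).
    { intros r [a ->]. specialize (IHphi (upd e n a)). apply Rabs_le_inv in IHphi. lra. }
    assert (Hne: exists r, (exists a, r = feval S pi (upd e n a) phi)) by
      (eexists; exists (szero S); reflexivity).
    destruct (Rsup_lub _ _ HB Hne) as [Hub Hl].
    apply Rabs_le. split.
    + assert (Hx := Hub _ (ex_intro _ (szero S) eq_refl)).
      specialize (IHphi (upd e n (szero S))). apply Rabs_le_inv in IHphi. lra.
    + apply Hl. intros r Hr; apply HB; auto.
  - assert (HB: forall r, (exists a, r = - feval S pi (upd e n a) phi) -> r <= fbound phi).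
    { intros r [a ->]. specialize (IHphi (upd e n a)). apply Rabs_le_inv in IHphi. lra. }
    assert (Hne: exists r, (exists a, r = - feval S pi (upd e n a) phi)) by
      (eexists; exists (szero S); reflexivity).
    destruct (Rsup_lub _ _ HB Hne) as [Hub Hl].
    rewrite Rabs_Ropp.
    apply Rabs_le. split.
    + assert (Hx := Hub _ (ex_intro _ (szero S) eq_refl)).
      specialize (IHphi (upd e n (szero S))). apply Rabs_le_inv in IHphi. lra.
    + apply Hl. intros r Hr; apply HB; auto.
Qed.

Lemma fsup_lub {P} (S : Lstr) (H : dbounded S) (pi : P -> car S) e n phi :
  is_lub (fun r => exists a, r = feval S pi (upd e n a) phi) (feval S pi e (fsup n phi)).
Proof.
  apply (Rsup_lub _ (fbound phi)).
  - intros r [a ->]. apply Rabs_le_inv, (feval_bound S H pi phi (upd e n a)).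
  - eexists; exists (szero S); reflexivity.
Qed.

Lemma finf_lub {P} (S : Lstr) (H : dbounded S) (pi : P -> car S) e n phi :
  is_lub (fun r => exists a, r = - feval S pi (upd e n a) phi) (- feval S pi e (finf n phi)).
Proof.
  simpl. rewrite Ropp_involutive.
  apply (Rsup_lub _ (fbound phi)).
  - intros r [a ->]. assert (h:=feval_bound S H pi phi (upd e n a)).
    apply Rabs_le_inv in h. lra.
  - eexists; exists (szero S); reflexivity.
Qed.

Lemma fsup_ge {P} S (H : dbounded S) (pi : P -> car S) e n phi a :
  feval S pi (upd e n a) phi <= feval S pi e (fsup n phi).
Proof. destruct (fsup_lub S H pi e n phi) as [h _]. apply h. exists a; reflexivity. Qed.

Lemma fsup_le {P} S (H : dbounded S) (pi : P -> car S) e n phi c :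
  (forall a, feval S pi (upd e n a) phi <= c) -> feval S pi e (fsup n phi) <= c.
Proof. intro Hc. destruct (fsup_lub S H pi e n phi) as [_ h]. apply h. intros r [a ->]; auto. Qed.

Lemma finf_le {P} S (H : dbounded S) (pi : P -> car S) e n phi a :
  feval S pi e (finf n phi) <= feval S pi (upd e n a) phi.
Proof. destruct (finf_lub S H pi e n phi) as [h _].
  assert (h' := h (- feval S pi (upd e n a) phi) (ex_intro _ a eq_refl)). lra. Qed.

Lemma finf_ge {P} S (H : dbounded S) (pi : P -> car S) e n phi c :
  (forall a, c <= feval S pi (upd e n a) phi) -> c <= feval S pi e (finf n phi).
Proof. intro Hc. destruct (finf_lub S H pi e n phi) as [_ h].
  assert (h' : - feval S pi e (finf n phi) <= - c). { apply h. intros r [a ->]. specialize (Hc a). lra. }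
  lra. Qed.

Definition aneg p := aimp p afalse.
Definition aex n p := aneg (aforall n (aneg p)).
Definition aand p q := aneg (aimp p (aneg q)).
Definition aor p q := aimp (aneg p) q.

Lemma asat_aex N e n p : asat N e (aex n p) <-> exists a, asat N (upd e n a) p.
Proof. unfold aex, aneg; simpl. split.
  - intro h. apply NNPP. intro h2. apply h. intros a ha. apply h2. eauto.
  - intros [a ha] h. exact (h a ha). Qed.
Lemma asat_aand N e p q : asat N e (aand p q) <-> asat N e p /\ asat N e q.
Proof. unfold aand, aneg; simpl. split.
  - intro h. split; apply NNPP; intro h2; apply h; intros; tauto.
  - tauto. Qed.
Lemma asat_aor N e p q : asat N e (aor p q) <-> asat N e p \/ asat N e q.
Proof. unfold aor, aneg; simpl. split.
  - intro h. destruct (classic (asat N e p)); tauto.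
  - tauto. Qed.

Lemma ind_gen N (HN : PAmodel N) phi e n (P : pcar N -> Prop) :
  (forall a, asat N (upd e n a) phi <-> P a) -> P (pzero N) ->
  (forall a, P a -> P (padd N a (pone N))) -> forall a, P a.
Proof. intros Heq H0 HS a. apply Heq. apply (pa_ind N HN).
  - apply Heq; auto.
  - intros b hb. apply Heq, HS, Heq, hb. Qed.

Ltac eqv := intro; repeat (setoid_rewrite asat_aex || setoid_rewrite asat_aand || setoid_rewrite asat_aor);
  simpl; unfold upd; simpl; try reflexivity.

Local Notation "a +p b" := (padd _ a b) (at level 50, left associativity).
Local Notation "a *p b" := (pmul _ a b) (at level 40, left associativity).
Local Notation "'Sc' a" := (padd _ a (pone _)) (at level 30).

Lemma add0l N (HN : PAmodel N) (x : pcar N) : pzero N +p x = x.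
Proof. revert x. apply (ind_gen N HN (aeq (aadd azero (avar 0)) (avar 0)) (fun _ => pzero N) 0).
  - eqv.
  - apply (pa_add0 N HN).
  - intros a h. rewrite (pa_addS N HN), h. reflexivity. Qed.

Lemma addSl N (HN : PAmodel N) (x y : pcar N) : (Sc x) +p y = Sc (x +p y).
Proof. revert y. apply (ind_gen N HN (aeq (aadd (aadd (avar 1) aone) (avar 0)) (aadd (aadd (avar 1) (avar 0)) aone)) (fun _ => x) 0).
  - eqv.
  - rewrite !(pa_add0 N HN). reflexivity.
  - intros a h. rewrite !(pa_addS N HN), h. reflexivity. Qed.

Lemma addC N (HN : PAmodel N) (x y : pcar N) : x +p y = y +p x.
Proof. revert y. apply (ind_gen N HN (aeq (aadd (avar 1) (avar 0)) (aadd (avar 0) (avar 1))) (fun _ => x) 0).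
  - eqv.
  - rewrite (pa_add0 N HN), (add0l N HN). reflexivity.
  - intros a h. rewrite (pa_addS N HN), (addSl N HN), h. reflexivity. Qed.

Lemma addA N (HN : PAmodel N) (x y z : pcar N) : (x +p y) +p z = x +p (y +p z).
Proof. revert z. apply (ind_gen N HN (aeq (aadd (aadd (avar 1) (avar 2)) (avar 0)) (aadd (avar 1) (aadd (avar 2) (avar 0)))) (upd (fun _ => x) 2 y) 0).
  - eqv.
  - rewrite !(pa_add0 N HN). reflexivity.
  - intros a h. rewrite !(pa_addS N HN), h. reflexivity. Qed.

Lemma cancel_r N (HN : PAmodel N) (x y z : pcar N) : y +p x = z +p x -> y = z.
Proof. revert x. apply (ind_gen N HN (aimp (aeq (aadd (avar 1) (avar 0)) (aadd (avar 2) (avar 0))) (aeq (avar 1) (avar 2))) (upd (fun _ => y) 2 z) 0 (fun x => y +p x = z +p x -> y = z)).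
  - eqv.
  - rewrite !(pa_add0 N HN). auto.
  - intros a h e. rewrite !(pa_addS N HN) in e. apply (pa_succ_inj N HN) in e. auto. Qed.

Lemma cancel_l N (HN : PAmodel N) (x y z : pcar N) : x +p y = x +p z -> y = z.
Proof. rewrite (addC N HN x y), (addC N HN x z). apply cancel_r; auto. Qed.

Lemma pred N (HN : PAmodel N) (x : pcar N) : x = pzero N \/ exists w, x = Sc w.
Proof. revert x. apply (ind_gen N HN (aor (aeq (avar 0) azero) (aex 1 (aeq (avar 0) (aadd (avar 1) aone)))) (fun _ => pzero N) 0).
  - eqv.
  - auto.
  - intros a _. right. eauto. Qed.

Definition ple N (x y : pcar N) := exists z, padd N x z = y.

Lemma le_total N (HN : PAmodel N) (x y : pcar N) : ple N x y \/ ple N y x.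
Proof. revert x. apply (ind_gen N HN (aor (aex 2 (aeq (aadd (avar 0) (avar 2)) (avar 1))) (aex 2 (aeq (aadd (avar 1) (avar 2)) (avar 0)))) (fun _ => y) 0).
  - eqv.
  - left. exists y. apply add0l; auto.
  - intros a [[z hz]|[z hz]].
    + destruct (pred N HN z) as [->|[w ->]].
      * right. exists (pone N). rewrite <- hz, (pa_add0 N HN). reflexivity.
      * left. exists w. rewrite (addSl N HN), <- (pa_addS N HN). auto.
    + right. exists (Sc z). rewrite (pa_addS N HN), hz. reflexivity. Qed.

Lemma distr N (HN : PAmodel N) (x a b : pcar N) : x *p (a +p b) = x *p a +p x *p b.
Proof. revert b. apply (ind_gen N HN (aeq (amul (avar 1) (aadd (avar 2) (avar 0))) (aadd (amul (avar 1) (avar 2)) (amul (avar 1) (avar 0)))) (upd (fun _ => x) 2 a) 0 (fun b => x *p (a +p b) = x *p a +p x *p b)).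
  - eqv.
  - rewrite (pa_add0 N HN), (pa_mul0 N HN), (pa_add0 N HN). reflexivity.
  - intros b h. rewrite (pa_addS N HN), !(pa_mulS N HN), h, (addA N HN). reflexivity. Qed.

Lemma le1 N (HN : PAmodel N) (x : pcar N) : x <> pzero N -> ple N (Sc (pzero N)) x.
Proof. intro hx. destruct (pred N HN x) as [->|[w ->]]; [congruence|].
  exists w. rewrite (addSl N HN), (add0l N HN). reflexivity. Qed.

Lemma div_uniq_half N (HN : PAmodel N) (x u v u' v' : pcar N) :
  x *p u +p v = x *p u' +p v' -> ple N (Sc v) x -> ple N u u' -> u = u' /\ v = v'.
Proof. intros H [z hz] [k hk]. subst u'.
  rewrite (distr N HN), (addA N HN) in H. apply (cancel_l N HN) in H.
  destruct (pred N HN k) as [->|[w ->]].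
  - rewrite (pa_mul0 N HN), (add0l N HN) in H. rewrite (pa_add0 N HN). auto.
  - exfalso. rewrite (pa_mulS N HN) in H. subst v.
    rewrite (addSl N HN), (addC N HN (x *p w) x), !(addA N HN) in hz.
    rewrite <- (pa_add0 N HN x) in hz at 3. apply (cancel_l N HN) in hz.
    rewrite !(pa_addS N HN) in hz. exact (pa_succ_ne0 N HN _ hz). Qed.

Lemma div_uniq N (HN : PAmodel N) (x u v u' v' : pcar N) :
  x *p u +p v = x *p u' +p v' -> ple N (Sc v) x -> ple N (Sc v') x -> u = u' /\ v = v'.
Proof. intros H h1 h2. destruct (le_total N HN u u') as [h|h].
  - apply (div_uniq_half N HN x u v u' v'); auto.
  - destruct (div_uniq_half N HN x u' v' u v); auto. Qed.

Lemma div_exists N (HN : PAmodel N) (x : pcar N) : x <> pzero N ->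
  forall y, exists u v, x *p u +p v = y /\ exists z, (Sc v) +p z = x.
Proof. intro hx.
  apply (ind_gen N HN (aex 2 (aex 3 (aand (aeq (aadd (amul (avar 1) (avar 2)) (avar 3)) (avar 0)) (aex 4 (aeq (aadd (aadd (avar 3) aone) (avar 4)) (avar 1)))))) (fun _ => x) 0).
  - eqv.
  - exists (pzero N), (pzero N). split.
    + rewrite (pa_mul0 N HN), (pa_add0 N HN). reflexivity.
    + apply le1; auto.
  - intros y [u [v [hy [z hz]]]]. destruct (pred N HN z) as [->|[w ->]].
    + rewrite (pa_add0 N HN) in hz. exists (Sc u), (pzero N). split.
      * rewrite (pa_add0 N HN), (pa_mulS N HN), <- hy, <- (pa_addS N HN), hz. reflexivity.
      * apply le1; auto.
    + exists u, (Sc v). split.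
      * rewrite (pa_addS N HN), hy. reflexivity.
      * exists w. rewrite (addSl N HN), <- (pa_addS N HN). exact hz. Qed.

Definition Ef {P} (xi yi ui vi : nat) : aform P :=
  fadd (fdist (tvar yi) (tadd (tmul (tvar xi) (tvar ui)) (tvar vi)))
       (fdist (tmeet (tadd (tvar vi) tone) (tvar xi)) (tadd (tvar vi) tone)).

Definition Eval (S : Lstr) (x y u v : car S) : R :=
  dist S y (sadd S (smul S x u) v) + dist S (smeet S (sadd S v (sone S)) x) (sadd S v (sone S)).
Arguments Eval : simpl never.

Lemma Ef_eval {P} S (pi : P -> car S) e xi yi ui vi :
  feval S pi e (Ef xi yi ui vi) = Eval S (e xi) (e yi) (e ui) (e vi).
Proof. reflexivity. Qed.

Definition body1 {P} : aform P :=
  fadd (fdist (tvar 2) (tvar 4)) (fadd (fdist (tvar 3) (tvar 5))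
   (fadd (fscale (-2) (Ef 0 1 2 3)) (fadd (fscale (-2) (Ef 0 1 4 5))
   (fadd (fscale (-2) fone) (fscale 2 (fdist (tvar 0) tzero)))))).

Definition B1 (S : Lstr) (x y u v u' v' : car S) : R :=
  dist S u u' + (dist S v v' + (-2 * Eval S x y u v + (-2 * Eval S x y u' v' +
   (-2 * 1 + 2 * dist S x (szero S))))).
Arguments B1 : simpl never.

Lemma body1_eval {P} S (pi : P -> car S) e :
  feval S pi e body1 = B1 S (e 0%nat) (e 1%nat) (e 2%nat) (e 3%nat) (e 4%nat) (e 5%nat).
Proof. reflexivity. Qed.

Definition S1 : aform Empty_set := fsup 0 (fsup 1 (fsup 2 (fsup 3 (fsup 4 (fsup 5 body1))))).

Definition body2 {P} : aform P :=
  fadd (finf 2 (finf 3 (Ef 0 1 2 3))) (fadd (fscale 2 (fdist (tvar 0) tzero)) (fscale (-2) fone)).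

Lemma body2_eval {P} S (pi : P -> car S) e :
  feval S pi e body2 = feval S pi e (finf 2 (finf 3 (Ef 0 1 2 3))) + (2 * dist S (e 0%nat) (szero S) + -2 * 1).
Proof. reflexivity. Qed.

Definition S2 : aform Empty_set := fsup 0 (fsup 1 body2).

Lemma S1_closed : closed_form S1.
Proof. unfold closed_form; simpl; repeat split; lia. Qed.
Lemma S2_closed : closed_form S2.
Proof. unfold closed_form; simpl; repeat split; lia. Qed.

Lemma PA_dist_cases N (a b : pcar N) :
  (a = b /\ dist (PA_Lstr N) a b = 0) \/ (a <> b /\ dist (PA_Lstr N) a b = 1).
Proof. simpl. destruct (excluded_middle_informative (a = b)); auto. Qed.

Lemma PA_dbounded N : dbounded (PA_Lstr N).
Proof. intros a b. destruct (PA_dist_cases N a b) as [[_ ->]|[_ ->]]; lra. Qed.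

Lemma PA_meet N (HN : PAmodel N) (a b : pcar N) : smeet (PA_Lstr N) a b = a -> ple N a b.
Proof. simpl. destruct (excluded_middle_informative (PA_le N a b)); auto.
  intro h; subst. exists (pzero N). apply (pa_add0 N HN). Qed.

Lemma PA_meet2 N (a b : pcar N) : ple N a b -> smeet (PA_Lstr N) a b = a.
Proof. simpl. destruct (excluded_middle_informative (PA_le N a b)); auto. intro h; contradiction. Qed.

Lemma PA_B1 N (HN : PAmodel N) x y u v u' v' : B1 (PA_Lstr N) x y u v u' v' <= 0.
Proof. unfold B1, Eval.
  repeat match goal with |- context [dist (PA_Lstr N) ?a ?b] =>
    destruct (PA_dist_cases N a b) as [[? ->]|[? ->]] end; try lra.
  all: exfalso.
  all: repeat match goal with H : smeet _ _ _ = _ |- _ => apply (PA_meet N HN) in H end.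
  all: subst y.
  all: match goal with H : _ = _ |- _ => destruct (div_uniq N HN x u v u' v' H); auto end.
Qed.

Lemma PA_S1 N (HN : PAmodel N) : sent_val (PA_Lstr N) S1 <= 0.
Proof. unfold sent_val, S1.
  repeat (apply fsup_le; [apply PA_dbounded|intro]).
  rewrite body1_eval. apply PA_B1; auto. Qed.

Lemma PA_S2 N (HN : PAmodel N) : sent_val (PA_Lstr N) S2 <= 0.
Proof. unfold sent_val, S2.
  repeat (apply fsup_le; [apply PA_dbounded|intro]).
  rewrite body2_eval. cbv beta iota delta [upd Nat.eqb].
  rename a into x, a0 into y.
  destruct (PA_dist_cases N x (szero (PA_Lstr N))) as [[hx ->]|[hx ->]].
  - eapply Rle_trans; [apply Rplus_le_compat_r; eapply Rle_trans; [apply (finf_le _ (PA_dbounded N) _ _ _ _ (pzero N))|apply (finf_le _ (PA_dbounded N) _ _ _ _ (pzero N))]|].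
    rewrite Ef_eval. unfold Eval. cbv beta iota delta [upd Nat.eqb].
    repeat match goal with |- context [dist (PA_Lstr N) ?a ?b] =>
      destruct (PA_dist_cases N a b) as [[_ ->]|[_ ->]] end; lra.
  - destruct (div_exists N HN x hx y) as [u [v [hy hz]]].
    eapply Rle_trans; [apply Rplus_le_compat_r; eapply Rle_trans; [apply (finf_le _ (PA_dbounded N) _ _ _ _ u)|apply (finf_le _ (PA_dbounded N) _ _ _ _ v)]|].
    rewrite Ef_eval. unfold Eval. cbv beta iota delta [upd Nat.eqb].
    rewrite (PA_meet2 N (sadd (PA_Lstr N) v (sone (PA_Lstr N))) x hz).
    destruct (PA_dist_cases N y (sadd (PA_Lstr N) (smul (PA_Lstr N) x u) v)) as [[_ ->]|[h _]].
    + destruct (PA_dist_cases N (sadd (PA_Lstr N) v (sone (PA_Lstr N))) (sadd (PA_Lstr N) v (sone (PA_Lstr N)))) as [[_ ->]|[h _]].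
      * lra.
      * congruence.
    + exfalso. apply h. symmetry. exact hy.
Qed.

Lemma M_dbounded M (HM : Lstructure_ok M) : dbounded M.
Proof. intros x y. exact (d_diam M HM x y). Qed.

Definition pi0 (M : Lstr) := fun p : Empty_set => match p return car M with end.

Lemma M_B1 M (HM : Lstructure_ok M) (H : sent_val M S1 <= 0) x y u v u' v' :
  B1 M x y u v u' v' <= 0.
Proof. eapply Rle_trans; [|exact H]. unfold sent_val, S1.
  pose proof (M_dbounded M HM) as HB.
  eapply Rle_trans; [|apply (fsup_ge _ HB _ _ 0 _ x)].
  eapply Rle_trans; [|apply (fsup_ge _ HB _ _ 1 _ y)].
  eapply Rle_trans; [|apply (fsup_ge _ HB _ _ 2 _ u)].
  eapply Rle_trans; [|apply (fsup_ge _ HB _ _ 3 _ v)].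
  eapply Rle_trans; [|apply (fsup_ge _ HB _ _ 4 _ u')].
  eapply Rle_trans; [|apply (fsup_ge _ HB _ _ 5 _ v')].
  rewrite body1_eval. apply Rle_refl. Qed.

Lemma M_S2 M (HM : Lstructure_ok M) (H : sent_val M S2 <= 0) x y :
  normal M x -> forall eps, eps > 0 -> exists u v, Eval M x y u v < eps.
Proof. intros hx eps he. apply NNPP; intro hn.
  pose proof (M_dbounded M HM) as HB.
  assert (h : eps <= feval M (pi0 M) (upd (upd (fun _ => szero M) 0 x) 1 y) (finf 2 (finf 3 (Ef 0 1 2 3)))).
  { apply finf_ge; [exact HB|]; intro u. apply finf_ge; [exact HB|]; intro v.
    rewrite Ef_eval. cbv beta iota delta [upd Nat.eqb]. apply Rnot_lt_le. intro h. apply hn. eauto. }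
  assert (h2 : feval M (pi0 M) (upd (upd (fun _ => szero M) 0 x) 1 y) body2 <= 0).
  { eapply Rle_trans; [|exact H]. unfold sent_val, S2.
    eapply Rle_trans; [|apply (fsup_ge _ HB _ _ 0 _ x)].
    eapply Rle_trans; [|apply (fsup_ge _ HB _ _ 1 _ y)]. apply Rle_refl. }
  rewrite body2_eval in h2. cbv beta iota delta [upd Nat.eqb] in h2.
  unfold normal in hx. rewrite hx in h2. cbv beta iota delta [upd Nat.eqb] in h. lra. Qed.

Lemma Eval_nonneg M (HM : Lstructure_ok M) x y u v : 0 <= Eval M x y u v.
Proof. unfold Eval. pose proof (d_diam M HM). 
  match goal with |- 0 <= dist M ?a ?b + dist M ?c ?d => destruct (H a b); destruct (H c d) end. lra. Qed.

Lemma Eval_lip M (HM : Lstructure_ok M) x y u v u' v' :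
  Eval M x y u v <= Eval M x y u' v' + dist M u u' + 3 * dist M v v'.
Proof. unfold Eval.
  set (A := sadd M (smul M x u) v). set (A' := sadd M (smul M x u') v').
  set (P := sadd M v (sone M)). set (P' := sadd M v' (sone M)).
  pose proof (d_tri M HM y A' A) as h1.
  pose proof (d_sym M HM A' A) as h2.
  pose proof (lip_add M HM (smul M x u) v (smul M x u') v') as h3.
  pose proof (lip_mul M HM x u x u') as h4.
  pose proof (d_refl M HM x) as h0.
  pose proof (d_tri M HM (smeet M P x) (smeet M P' x) P) as h5.
  pose proof (d_tri M HM (smeet M P' x) P' P) as h5'.
  pose proof (lip_meet M HM P x P' x) as h6.
  pose proof (lip_add M HM v (sone M) v' (sone M)) as h7.
  pose proof (d_refl M HM (sone M)) as h8.
  pose proof (d_sym M HM P' P) as h9.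
  fold A A' P P' in h3, h7. lra. Qed.

Lemma M_stab M (HM : Lstructure_ok M) (H : sent_val M S1 <= 0) x y u v u' v' :
  normal M x -> dist M u u' + dist M v v' <= 2 * Eval M x y u v + 2 * Eval M x y u' v'.
Proof. intro hx. pose proof (M_B1 M HM H x y u v u' v') as h. unfold B1 in h.
  unfold normal in hx. rewrite hx in h. lra. Qed.

Lemma inv_small eps : 0 < eps -> exists N, forall n, (N <= n)%nat -> / (INR n + 1) < eps.
Proof. intro he. destruct (archimed_cor1 eps he) as [N [h1 h2]]. exists N. intros n hn.
  apply le_INR in hn. apply lt_0_INR in h2.
  eapply Rle_lt_trans; [|exact h1]. apply Rinv_le_contravar; lra. Qed.

Lemma M_exists M (HM : Lstructure_ok M) (H1 : sent_val M S1 <= 0) (H2 : sent_val M S2 <= 0) x y :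
  normal M x -> exists u v, Eval M x y u v = 0.
Proof. intro hx.
  assert (Hn: forall n:nat, exists p : car M * car M, Eval M x y (fst p) (snd p) < / (INR n + 1)).
  { intro n. assert (hp: / (INR n + 1) > 0). { apply Rinv_0_lt_compat. pose proof (pos_INR n). lra. }
    destruct (M_S2 M HM H2 x y hx _ hp) as [u [v h]]. exists (u,v); auto. }
  pose (s := fun n => proj1_sig (constructive_indefinite_description _ (Hn n))).
  assert (hs : forall n, Eval M x y (fst (s n)) (snd (s n)) < /(INR n + 1)).
  { intro n. exact (proj2_sig (constructive_indefinite_description _ (Hn n))). }
  assert (hst : forall m n, dist M (fst (s m)) (fst (s n)) + dist M (snd (s m)) (snd (s n)) <
           2 * / (INR m + 1) + 2 * / (INR n + 1)).
  { intros m n. pose proof (M_stab M HM H1 x y (fst (s m)) (snd (s m)) (fst (s n)) (snd (s n)) hx).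
    pose proof (hs m). pose proof (hs n). lra. }
  assert (Hc : forall eps, eps > 0 -> exists N, forall m n, (m >= N)%nat -> (n >= N)%nat ->
     dist M (fst (s m)) (fst (s n)) < eps /\ dist M (snd (s m)) (snd (s n)) < eps).
  { intros eps he. destruct (inv_small (eps/4)) as [N hN]; [lra|]. exists N. intros m n hm hn.
    pose proof (hst m n). pose proof (hN m hm). pose proof (hN n hn).
    pose proof (d_diam M HM (fst (s m)) (fst (s n))). pose proof (d_diam M HM (snd (s m)) (snd (s n))).
    split; lra. }
  destruct (d_complete M HM (fun n => fst (s n))) as [u hu].
  { intros eps he. destruct (Hc eps he) as [N hN]. exists N. intros m n hm hn. apply (hN m n hm hn). }
  destruct (d_complete M HM (fun n => snd (s n))) as [v hv].
  { intros eps he. destruct (Hc eps he) as [N hN]. exists N. intros m n hm hn. apply (hN m n hm hn). }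
  exists u, v.
  assert (Hsmall : forall eps, eps > 0 -> Eval M x y u v < 5 * eps).
  { intros eps he. destruct (hu eps he) as [N1 h1]. destruct (hv eps he) as [N2 h2].
    destruct (inv_small eps he) as [N3 h3].
    set (n := Nat.max N1 (Nat.max N2 N3)).
    assert (n1 : (n >= N1)%nat) by lia. assert (n2 : (n >= N2)%nat) by lia. assert (n3 : (N3 <= n)%nat) by lia.
    specialize (h1 n n1). specialize (h2 n n2). specialize (h3 n n3). pose proof (hs n).
    pose proof (Eval_lip M HM x y u v (fst (s n)) (snd (s n))).
    rewrite (d_sym M HM u), (d_sym M HM v) in H0. simpl in h1, h2. lra. }
  pose proof (Eval_nonneg M HM x y u v).
  destruct (Rle_or_lt (Eval M x y u v) 0) as [h|h]; [lra|].
  specialize (Hsmall (Eval M x y u v / 5)). lra. Qed.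

Lemma Eval_zero M (HM : Lstructure_ok M) x y u v : Eval M x y u v = 0 ->
  y = sadd M (smul M x u) v /\ Lle M (sadd M v (sone M)) x.
Proof. unfold Eval, Lle. intro h. pose proof (d_diam M HM).
  match type of h with dist M ?a ?b + dist M ?c ?d = 0 => destruct (H a b); destruct (H c d) end.
  split; apply (d_sep M HM); lra. Qed.

Lemma zero_Eval M (HM : Lstructure_ok M) x y u v :
  y = sadd M (smul M x u) v -> Lle M (sadd M v (sone M)) x -> Eval M x y u v = 0.
Proof. unfold Eval, Lle. intros h1 h2. rewrite <- h1, h2, !(d_refl M HM). lra. Qed.

Lemma inner_eval {P} S (pi : P -> car S) e a :
  feval S pi e (fadd (fdist (tvar a) (tvar 2)) (fscale 2 (Ef 0 1 3 4))) =
  dist S (e a) (e 2%nat) + 2 * Eval S (e 0%nat) (e 1%nat) (e 3%nat) (e 4%nat).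
Proof. reflexivity. Qed.

Lemma defin M (HM : Lstructure_ok M) (H1 : sent_val M S1 <= 0) (f g : car M -> car M -> car M)
  (Hfg : forall x y, normal M x -> Eval M x y (f x y) (g x y) = 0) :
  definable_on_E M f /\ definable_on_E M g.
Proof. pose proof (M_dbounded M HM) as HB. split; intros eps he.
  - exists (finf 3 (finf 4 (fadd (fdist (tvar 3) (tvar 2)) (fscale 2 (Ef 0 1 3 4))))). split.
    { simpl; repeat split; lia. }
    intros x y z hx.
    assert (E : feval M (fun a => a) (env3 M x y z) (finf 3 (finf 4 (fadd (fdist (tvar 3) (tvar 2)) (fscale 2 (Ef 0 1 3 4))))) = dist M (f x y) z).
    { apply Rle_antisym.
      - eapply Rle_trans; [apply (finf_le _ HB _ _ 3 _ (f x y))|].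
        eapply Rle_trans; [apply (finf_le _ HB _ _ 4 _ (g x y))|].
        rewrite inner_eval. cbv beta iota delta [upd Nat.eqb env3]. rewrite (Hfg x y hx). lra.
      - apply finf_ge; [exact HB|]; intro u. apply finf_ge; [exact HB|]; intro v.
        rewrite inner_eval. cbv beta iota delta [upd Nat.eqb env3].
        pose proof (M_stab M HM H1 x y u v (f x y) (g x y) hx) as hs. rewrite (Hfg x y hx) in hs.
        pose proof (d_tri M HM (f x y) u z). pose proof (d_sym M HM (f x y) u).
        pose proof (d_diam M HM v (g x y)). lra. }
    rewrite E, Rminus_diag_eq, Rabs_R0 by reflexivity. lra.
  - exists (finf 3 (finf 4 (fadd (fdist (tvar 4) (tvar 2)) (fscale 2 (Ef 0 1 3 4))))). split.
    { simpl; repeat split; lia. }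
    intros x y z hx.
    assert (E : feval M (fun a => a) (env3 M x y z) (finf 3 (finf 4 (fadd (fdist (tvar 4) (tvar 2)) (fscale 2 (Ef 0 1 3 4))))) = dist M (g x y) z).
    { apply Rle_antisym.
      - eapply Rle_trans; [apply (finf_le _ HB _ _ 3 _ (f x y))|].
        eapply Rle_trans; [apply (finf_le _ HB _ _ 4 _ (g x y))|].
        rewrite inner_eval. cbv beta iota delta [upd Nat.eqb env3]. rewrite (Hfg x y hx). lra.
      - apply finf_ge; [exact HB|]; intro u. apply finf_ge; [exact HB|]; intro v.
        rewrite inner_eval. cbv beta iota delta [upd Nat.eqb env3].
        pose proof (M_stab M HM H1 x y u v (f x y) (g x y) hx) as hs. rewrite (Hfg x y hx) in hs.
        pose proof (d_tri M HM (g x y) v z). pose proof (d_sym M HM (g x y) v).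
        pose proof (d_diam M HM u (f x y)). lra. }
    rewrite E, Rminus_diag_eq, Rabs_R0 by reflexivity. lra.
Qed.

Theorem mainTheorem9 (M : Lstr) (HM : Lstructure_ok M) (HAA : satisfies_AA M)
    (Hsat : extremally_aleph0_saturated M) :
  (forall x y u v u' v' : car M, normal M x ->
     y = sadd M (smul M x u) v -> Lle M (sadd M v (sone M)) x ->
     y = sadd M (smul M x u') v' -> Lle M (sadd M v' (sone M)) x ->
     u = u' /\ v = v') /\
  exists f g : car M -> car M -> car M,
    (forall x y : car M, normal M x ->
       y = sadd M (smul M x (f x y)) (g x y) /\ Lle M (sadd M (g x y) (sone M)) x) /\
    definable_on_E M f /\ definable_on_E M g.
Proof.
  assert (H1 : sent_val M S1 <= 0) by (apply HAA; [apply S1_closed|intros N HN; apply PA_S1; auto]).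
  assert (H2 : sent_val M S2 <= 0) by (apply HAA; [apply S2_closed|intros N HN; apply PA_S2; auto]).
  split.
  - intros x y u v u' v' hx e1 l1 e2 l2.
    pose proof (M_stab M HM H1 x y u v u' v' hx) as hs.
    rewrite (zero_Eval M HM x y u v e1 l1), (zero_Eval M HM x y u' v' e2 l2) in hs.
    pose proof (d_diam M HM u u'). pose proof (d_diam M HM v v').
    split; apply (d_sep M HM); lra.
  - pose (fg := fun x y => epsilon (inhabits (szero M, szero M))
                  (fun p : car M * car M => normal M x -> Eval M x y (fst p) (snd p) = 0)).
    assert (Hfg : forall x y, normal M x -> Eval M x y (fst (fg x y)) (snd (fg x y)) = 0).
    { intros x y hx. unfold fg. apply (epsilon_spec (inhabits (szero M, szero M))
        (fun p : car M * car M => normal M x -> Eval M x y (fst p) (snd p) = 0)); auto.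
      destruct (M_exists M HM H1 H2 x y hx) as [u [v h]]. exists (u, v). auto. }
    exists (fun x y => fst (fg x y)), (fun x y => snd (fg x y)). split.
    + intros x y hx. apply (Eval_zero M HM). apply Hfg; auto.
    + apply (defin M HM H1). intros x y hx. apply Hfg; auto.
Qed.
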